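(* Let $\lambda,\mu$ be strict partitions with $\mu\subseteq\lambda$ such that the shifted skew diagram $\widetilde{\lambda/\mu}$ has $n$ boxes and contains the three boxes $(i,j)$, $(i,j+1)$ and $(i+1,j+1)$ for some $i,j$. Write $Q_{\lambda/\mu}=\sum_{\nu\in OP(n)}a_\nu p_\nu$. Then $\sum_{\nu\in OP(n)}a_\nu=0$.
   Context: For strict partitions $\mu\subseteq\lambda$, the shifted skew diagram $\widetilde{\lambda/\mu}$ is the set of boxes $(r,c)$ with $1\le r\le\ell(\lambda)$ and $r+\mu_r\le c\le r+\lambda_r-1$ (with $\mu_r=0$ for $r>\ell(\mu)$); $(r,c)$ means row $r$ (rows numbered top to bottom) and column $c$. Let $\mathbf{P}'=\{1'<1<2'<2<\cdots\}$; $|a|$ denotes the unmarked version of $a$. A marked shifted tableau of shape $\widetilde{\lambda/\mu}$ is a filling of its boxes by letters of $\mathbf{P}'$ such that rows and columns weakly increase, each column contains at most one unmarked $k$ and each row at most one marked $k'$ for each $k$. Its content is $(c_1,c_2,\dots)$ with $c_i$ the number of entries $a$ with $|a|=i$. The skew Schur $Q$-function is $Q_{\lambda/\mu}=\sum_T x^{c(T)}$ over all such tableaux; it lies in $\Gamma=\mathbb{Q}[p_1,p_3,\dots]$ and so expands in $\{p_\nu:\nu\in OP(n)\}$, $OP(n)$ being the partitions of $n$ into odd parts. *)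

(* Defs.v *)
From HB Require Import structures.
From mathcomp Require Import all_boot all_order all_algebra.
Set Implicit Arguments. Unset Strict Implicit. Unset Printing Implicit Defensive.
Import Order.TTheory GRing.Theory Num.Theory.

Definition strict_partition (l : seq nat) : bool :=
  sorted gtn l && all (fun x => 0 < x) l.

Definition subpart (mu lam : seq nat) : bool :=
  (size mu <= size lam) && all (fun r => nth 0 mu r <= nth 0 lam r) (iota 0 (size lam)).

(* Boxes (r,c) of the shifted skew diagram, rows r = 1..l(lam),
   columns r + mu_r <= c <= r + lam_r - 1 (mu_r = 0 for r > l(mu)). *)
Definition sbox (lam mu : seq nat) : seq (nat * nat) :=
  flatten [seq [seq (r, c) | c <- iota (r + nth 0 mu r.-1) (nth 0 lam r.-1 - nth 0 mu r.-1)]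
          | r <- iota 1 (size lam)].

(* Marked letters: (k, b) with k : 'I_L stands for the letter k+1 if b = false
   (unmarked) and (k+1)' if b = true (marked).  Total order of P':
   1' < 1 < 2' < 2 < ..., encoded by the following rank. *)
Definition lrank L (a : 'I_L * bool) : nat := (2 * a.1 + ~~ a.2)%N.

Definition is_mst (lam mu : seq nat) L
    (T : {ffun 'I_(size (sbox lam mu)) -> 'I_L * bool}) : bool :=
  [forall p : 'I_(size (sbox lam mu)), forall q : 'I_(size (sbox lam mu)),
     let bp := nth (0, 0)%N (sbox lam mu) p in
     let bq := nth (0, 0)%N (sbox lam mu) q in
     [&& ((bp.1 == bq.1) && (bp.2 < bq.2)) ==> (lrank (T p) <= lrank (T q)),
         ((bp.2 == bq.2) && (bp.1 < bq.1)) ==> (lrank (T p) <= lrank (T q)),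
         ((p != q) && (bp.2 == bq.2)) ==> ~~ ((T p == T q) && ~~ (T p).2) &
         ((p != q) && (bp.1 == bq.1)) ==> ~~ ((T p == T q) && (T p).2)]].

(* Coefficient of x_1^{c_1} ... x_L^{c_L} (L = size c) in Q_{lam/mu}:
   the number of marked shifted tableaux of shape lam/mu with content c. *)
Definition Qcoef (lam mu : seq nat) (c : seq nat) : nat :=
  #|[set T : {ffun 'I_(size (sbox lam mu)) -> 'I_(size c) * bool} |
      is_mst T && [forall k : 'I_(size c), #|[pred p | (T p).1 == k]| == nth 0 c k]]|.

(* Coefficient of x_1^{c_1} ... x_L^{c_L} in p_nu = prod_i p_{nu_i}:
   number of maps f from parts of nu to variables with sum_{f i = k} nu_i = c_k. *)
Definition pcoef (nu : seq nat) (c : seq nat) : nat :=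
  #|[set f : {ffun 'I_(size nu) -> 'I_(size c)} |
      [forall k : 'I_(size c), (\sum_(i | f i == k) nth 0 nu i)%N == nth 0 c k]]|.

Definition is_OP (n : nat) (nu : seq nat) : bool :=
  sorted geq nu && all odd nu && (sumn nu == n).

Fixpoint allseqs (len bound : nat) : seq (seq nat) :=
  if len is l.+1 then
    [::] :: [seq x :: s | x <- iota 1 bound, s <- allseqs l bound]
  else [:: [::]].

Definition OP (n : nat) : seq (seq nat) := undup [seq nu <- allseqs n n | is_OP n nu].

(* Main.v *)
Require Import Defs.
From HB Require Import structures.
From mathcomp Require Import all_boot all_order all_algebra.
From mathcomp Require Import zify.
Import Order.TTheory GRing.Theory Num.Theory.
Local Open Scope ring_scope.

Lemma pcoef1 nu n : nu \in OP n -> pcoef nu [:: n] = 1%N.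
Proof.
rewrite /OP mem_undup mem_filter => /andP[/andP[/andP[_ _] /eqP hs] _].
rewrite /pcoef.
rewrite (_ : [set f | _] = setT); first by rewrite cardsT card_ffun !card_ord exp1n.
apply/setP => f; rewrite !inE; apply/forallP => k /=.
rewrite (ord1 k) /=.
rewrite (eq_bigl xpredT); last by move=> i; rewrite !ord1.
by rewrite -hs sumnE (big_nth 0%N) big_mkord.
Qed.

Lemma lrank1 (x : 'I_1 * bool) : x = (ord0, ~~ (lrank x == 1%N)).
Proof. by case: x => k b; rewrite (ord1 k); case: b. Qed.

Lemma no_mst lam mu i j (T : {ffun 'I_(size (sbox lam mu)) -> 'I_1 * bool}) :
  (i, j) \in sbox lam mu -> (i, j.+1) \in sbox lam mu -> (i.+1, j.+1) \in sbox lam mu ->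
  ~~ is_mst T.
Proof.
set s := sbox lam mu => hA hB hC.
have iA : (index (i, j) s < size s)%N by rewrite index_mem.
have iB : (index (i, j.+1) s < size s)%N by rewrite index_mem.
have iC : (index (i.+1, j.+1) s < size s)%N by rewrite index_mem.
set pA := Ordinal iA; set pB := Ordinal iB; set pC := Ordinal iC.
have eA : nth (0,0)%N s pA = (i, j) by rewrite /= nth_index.
have eB : nth (0,0)%N s pB = (i, j.+1) by rewrite /= nth_index.
have eC : nth (0,0)%N s pC = (i.+1, j.+1) by rewrite /= nth_index.
have nAB : pA != pB.
  by apply/eqP => h; move: eB; rewrite -h eA => -[]; lia.
have nBC : pB != pC.
  by apply/eqP => h; move: eC; rewrite -h eB => -[]; lia.
apply/negP => /forallP H.
have HAB := forallP (H pA) pB; have HBC := forallP (H pB) pC.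
rewrite /= eA eB eC /= !eqxx ltnSn /= nAB nBC !andbT /= in HAB HBC.
case/and4P: HAB => Hr _ _ Hm.
case/and4P: HBC => _ Hc Hu _.
idtac.
rewrite ltnSn /= in Hc.
move: Hr Hm Hc Hu.
case: (T pA) => a1 b1; case: (T pB) => a2 b2; case: (T pC) => a3 b3.
rewrite (ord1 a1) (ord1 a2) (ord1 a3) /lrank /=.
by case: b1; case: b2; case: b3.
Qed.

Theorem mainTheorem7 (lam mu : seq nat) (n : nat) (a : seq nat -> rat) :
  strict_partition lam -> strict_partition mu -> subpart mu lam ->
  size (sbox lam mu) = n ->
  (exists i j : nat, [/\ (i, j) \in sbox lam mu, (i, j.+1) \in sbox lam mu
                       & (i.+1, j.+1) \in sbox lam mu]) ->
  (forall c : seq nat,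
     (Qcoef lam mu c)%:R = \sum_(nu <- OP n) a nu * (pcoef nu c)%:R) ->
  \sum_(nu <- OP n) a nu = 0.
Proof.
move=> _ _ _ _ [i [j [hA hB hC]]] /(_ [:: n]) HQ.
have -> : \sum_(nu <- OP n) a nu = \sum_(nu <- OP n) a nu * (pcoef nu [:: n])%:R.
  by rewrite big_seq_cond [RHS]big_seq_cond; apply: eq_bigr => nu /andP[h _];
     rewrite pcoef1 // mulr1.
rewrite -HQ /Qcoef.
rewrite (_ : [set T | _] = set0) ?cards0 //.
apply/setP => T; rewrite !inE.
by rewrite (negbTE (@no_mst lam mu i j T hA hB hC)).
Qed.
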